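(* Let $L$ be a multisorted algebra in the positive quantifier-free signature with equality satisfying axioms (1), (2), (3), (11), (12), (13). Let $F$ be a prime filter on sort $n$ of $L$. Let $F_1,\dots,F_n$ be symbols such that $F_i=F_j$ if and only if $\Delta^n_{i,j}\in F$, and let $W=\{F_1,\dots,F_n\}$. Define $\varphi\colon L\to A(W)$ on each sort $k$ by: for each substitution $\alpha\colon k\to n$, $\alpha^{\mathrm{tuple}}(F_1,\dots,F_n)\in\varphi(r)$ if and only if $\alpha(r)\in F$. Then $\varphi$ is (well defined and) a morphism of positive quantifier-free algebras with equality.
   Context: Signature. There is a sort $n$ for each $n\ge0$. For every function $\alpha\colon\{1,\dots,n\}\to\{1,\dots,k\}$ there is a unary function symbol (''substitution'') $\alpha\colon n\to k$ (argument of sort $n$, value of sort $k$). Each sort has constants $0,1$ and binary $\vee,\wedge$; for each $n$ and $1\le i,j\le n$ there is a constant $\Delta^n_{i,j}$ of sort $n$. This is the positive quantifier-free signature with equality. For $\alpha\colon k\to n$, $\beta\colon n\to m$, $\beta\circ\alpha$ is the substitution symbol of the composite function. For a set $W$: $\alpha^{\mathrm{tuple}}(x_1,\dots,x_k)=(x_{\alpha(1)},\dots,x_{\alpha(n)})$, $\alpha^{\mathrm{relation}}(r)=\{\bar x\in W^k:\alpha^{\mathrm{tuple}}(\bar x)\in r\}$. The positive quantifier-free algebra with equality $A(W)$ interprets sort $n$ as $\mathcal P(W^n)$, $\alpha$ as $\alpha^{\mathrm{relation}}$, $0,1,\vee,\wedge$ as $\emptyset,W^n,\cup,\cap$, and $\Delta^n_{i,j}=\{(x_1,\dots,x_n)\in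 W^n: x_i=x_j\}$. $x\le y$ means $x=x\wedge y$. Axioms: (1) each sort is a bounded distributive lattice; (2) substitutions preserve $0,1,\vee,\wedge$; (3) $(\beta\circ\alpha)(r)=\beta(\alpha(r))$; (11) $\Delta^n_{i,i}=1$, $\Delta^n_{i,j}=\Delta^n_{j,i}$, $\Delta^n_{i,j}\wedge\Delta^n_{j,k}\le\Delta^n_{i,k}$; (12) for substitutions $\alpha,\beta\colon k\to n$ and all $r$ of sort $k$: $\alpha(r)\wedge\bigwedge_{l=1}^k\Delta^n_{\alpha(l),\beta(l)}=\beta(r)\wedge\bigwedge_{l=1}^k\Delta^n_{\alpha(l),\beta(l)}$; (13) for each substitution $\alpha\colon k\to n$: $\alpha(\Delta^k_{i,j})=\Delta^n_{\alpha(i),\alpha(j)}$. A prime filter is a proper, nonempty, upward-closed, $\wedge$-closed subset of a sort with $x\vee y\in F\Rightarrow x\in F$ or $y\in F$. *)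

(* Defs.v *)
From mathcomp Require Import all_boot.
Set Implicit Arguments. Unset Strict Implicit. Unset Printing Implicit Defensive.

(* Convention: the index set {1,...,n} of the paper is rendered as 'I_n = {0,...,n-1}. *)

Unset Implicit Arguments.
Record pqfe_alg := PQFEAlg {
  car : nat -> Type;
  zero : forall n, car n;
  one : forall n, car n;
  join : forall n, car n -> car n -> car n;
  meet : forall n, car n -> car n -> car n;
  Dl : forall n, 'I_n -> 'I_n -> car n;
  subst : forall k n, ('I_k -> 'I_n) -> car k -> car n
}.
Set Implicit Arguments.

Section PQFE.
Variable L : pqfe_alg.

Definition leL n (x y : car L n) : Prop := x = meet L _ x y.

Definition ax1 : Prop := forall n,
  (forall x y z : car L n, join L _ x (join L _ y z) = join L _ (join L _ x y) z) /\
  (forall x y z : car L n, meet L _ x (meet L _ y z) = meet L _ (meet L _ x y) z) /\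
  (forall x y : car L n, join L _ x y = join L _ y x) /\
  (forall x y : car L n, meet L _ x y = meet L _ y x) /\
  (forall x y : car L n, join L _ x (meet L _ x y) = x) /\
  (forall x y : car L n, meet L _ x (join L _ x y) = x) /\
  (forall x y z : car L n, meet L _ x (join L _ y z) = join L _ (meet L _ x y) (meet L _ x z)) /\
  (forall x : car L n, join L _ x (zero L n) = x) /\
  (forall x : car L n, meet L _ x (one L n) = x).

Definition ax2 : Prop := forall k n (a : 'I_k -> 'I_n),
  subst L _ _ a (zero L k) = zero L n /\ subst L _ _ a (one L k) = one L n /\
  (forall x y, subst L _ _ a (join L _ x y) = join L _ (subst L _ _ a x) (subst L _ _ a y)) /\
  (forall x y, subst L _ _ a (meet L _ x y) = meet L _ (subst L _ _ a x) (subst L _ _ a y)).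

Definition ax3 : Prop := forall k n m (a : 'I_k -> 'I_n) (b : 'I_n -> 'I_m) (r : car L k),
  subst L _ _ (fun i => b (a i)) r = subst L _ _ b (subst L _ _ a r).

Definition ax11 : Prop := forall n,
  (forall i : 'I_n, Dl L n i i = one L n) /\
  (forall i j : 'I_n, Dl L n i j = Dl L n j i) /\
  (forall i j k : 'I_n, leL (meet L _ (Dl L n i j) (Dl L n j k)) (Dl L n i k)).

Fixpoint bigmeet_seq n (s : seq (car L n)) : car L n :=
  match s with [::] => one L n | x :: s' => meet L _ x (bigmeet_seq s') end.

Definition ax12 : Prop := forall k n (a b : 'I_k -> 'I_n) (r : car L k),
  let D := bigmeet_seq [seq Dl L n (a l) (b l) | l <- enum 'I_k] in
  meet L _ (subst L _ _ a r) D = meet L _ (subst L _ _ b r) D.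

Definition ax13 : Prop := forall k n (a : 'I_k -> 'I_n) (i j : 'I_k),
  subst L _ _ a (Dl L k i j) = Dl L n (a i) (a j).

Definition pqfe_axioms : Prop := ax1 /\ ax2 /\ ax3 /\ ax11 /\ ax12 /\ ax13.

Definition prime_filter n (F : car L n -> Prop) : Prop :=
  (exists x, ~ F x) /\ (exists x, F x) /\
  (forall x y, F x -> leL x y -> F y) /\
  (forall x y, F x -> F y -> F (meet L _ x y)) /\
  (forall x y, F (join L _ x y) -> F x \/ F y).

(* morphism of positive quantifier-free algebras with equality from L to A(W);
   sort k of A(W) is the powerset of W^k = ('I_k -> W) *)
Definition is_morphism_to_AW (W : Type) (phi : forall k, car L k -> (('I_k -> W) -> Prop)) : Prop :=
  (forall k, phi k (zero L k) = (fun _ => False)) /\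
  (forall k, phi k (one L k) = (fun _ => True)) /\
  (forall k x y, phi k (join L _ x y) = (fun t => phi k x t \/ phi k y t)) /\
  (forall k x y, phi k (meet L _ x y) = (fun t => phi k x t /\ phi k y t)) /\
  (forall k (i j : 'I_k), phi k (Dl L k i j) = (fun t => t i = t j)) /\
  (forall k n (a : 'I_k -> 'I_n) (r : car L k),
     phi n (subst L _ _ a r) = (fun t : 'I_n -> W => phi k r (fun i => t (a i)))).

End PQFE.

(* Main.v *)
From Stdlib Require Import FunctionalExtensionality PropExtensionality ClassicalEpsilon.
Require Import Defs.
From mathcomp Require Import all_boot.

Section Aux.
Variable L : pqfe_alg.
Hypothesis H1 : ax1 L.

Lemma meet_idem n (x : car L n) : meet L _ x x = x.
Proof.
have [_ [_ [_ [_ [Ha [Hb _]]]]]] := H1 n.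
by rewrite -{2}(Ha x x) Hb.
Qed.

Lemma meet_le_r n (x y : car L n) : leL (meet L _ x y) y.
Proof.
have [_ [HA _]] := H1 n. by rewrite /leL -HA meet_idem.
Qed.

Lemma meet_le_l n (x y : car L n) : leL (meet L _ x y) x.
Proof.
have [_ [_ [_ [HC _]]]] := H1 n. rewrite HC; exact: meet_le_r.
Qed.

Lemma le_join n (x y : car L n) : leL x (join L _ x y).
Proof. have [_ [_ [_ [_ [_ [Hb _]]]]]] := H1 n. by rewrite /leL Hb. Qed.

Lemma zero_le n (x : car L n) : leL (zero L n) x.
Proof.
have [_ [_ [Hjc [_ [_ [Hb [_ [Hz _]]]]]]]] := H1 n.
by rewrite /leL -{1}(Hz x) Hjc Hb.
Qed.

Lemma le_one n (x : car L n) : leL x (Defs.one L n).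
Proof. have [_ [_ [_ [_ [_ [_ [_ [_ Ho]]]]]]]] := H1 n. by rewrite /leL Ho. Qed.
End Aux.

Theorem lemma4p16 (L : pqfe_alg) (HL : pqfe_axioms L) (n : nat)
  (F : car L n -> Prop) (HF : prime_filter F)
  (W : Type) (Fs : 'I_n -> W)
  (HFs : forall i j : 'I_n, Fs i = Fs j <-> F (Dl L n i j))
  (HW : forall w : W, exists i : 'I_n, Fs i = w) :
  exists phi : forall k, car L k -> (('I_k -> W) -> Prop),
    (forall k (a : 'I_k -> 'I_n) (r : car L k),
        phi k r (fun i => Fs (a i)) <-> F (subst L k n a r)) /\
    is_morphism_to_AW phi.
Proof.
have [H1 [H2 [H3 [H11 [H12 H13]]]]] := HL.
have [[x0 Hx0] [[x1 Hx1] [Hup [Hmeet Hprime]]]] := HF.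
have Fone : F (Defs.one L n) by apply: Hup Hx1 _; apply: le_one.
have Fnz : ~ F (zero L n) by move=> Hz; apply: Hx0; apply: Hup Hz _; apply: zero_le.
have Fml : forall x y, F (meet L _ x y) -> F x.
  by move=> x y H; apply: Hup H _; apply: meet_le_l.
have Fmr : forall x y, F (meet L _ x y) -> F y.
  by move=> x y H; apply: Hup H _; apply: meet_le_r.
have lift : forall k (t : 'I_k -> W), exists a, forall i, t i = Fs (a i).
  move=> k t.
  exists (fun i => proj1_sig (constructive_indefinite_description _ (HW (t i)))).
  move=> i; by case: (constructive_indefinite_description _ _).
have wd : forall k (a b : 'I_k -> 'I_n) (r : car L k),
    (forall i, Fs (a i) = Fs (b i)) -> F (subst L _ _ a r) -> F (subst L _ _ b r).
  move=> k a b r Hab Ha.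
  have HD : forall s : seq 'I_k,
      F (bigmeet_seq [seq Dl L n (a l) (b l) | l <- s]).
    elim=> [|l s IH]; first exact: Fone.
    apply: Hmeet => //; exact/HFs.
  have E := H12 k n a b r; cbv zeta in E.
  apply: (Fml _ (bigmeet_seq [seq Dl L n (a l) (b l) | l <- enum 'I_k])).
  rewrite -E; exact: Hmeet.
pose phi := fun k (r : car L k) (t : 'I_k -> W) =>
  exists a, (forall i, t i = Fs (a i)) /\ F (subst L _ _ a r).
have key : forall k r (t : 'I_k -> W) a, (forall i, t i = Fs (a i)) ->
    (phi k r t <-> F (subst L _ _ a r)).
  move=> k r t a Ha; split.
  - case=> b [Hb Fb]; apply: (wd _ b) => // i; by rewrite -Hb -Ha.
  - by move=> Fa; exists a.
have feq : forall k (P Q : ('I_k -> W) -> Prop), (forall t, P t <-> Q t) -> P = Q.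
  move=> k P Q H; apply: functional_extensionality => t.
  exact: propositional_extensionality.
exists phi; split.
  by move=> k a r; apply: key.
split; [|split; [|split; [|split; [|split]]]].
- move=> k; apply: feq => t; have [a Ha] := lift k t; rewrite (key _ _ _ _ Ha).
  have [-> _] := H2 k n a; split => //.
- move=> k; apply: feq => t; have [a Ha] := lift k t; rewrite (key _ _ _ _ Ha).
  have [_ [-> _]] := H2 k n a; split => //.
- move=> k x y; apply: feq => t; have [a Ha] := lift k t.
  rewrite (key _ _ _ _ Ha) (key _ _ _ _ Ha) (key _ _ _ _ Ha).
  have [_ [_ [-> _]]] := H2 k n a; split; first exact: Hprime.
  case=> H.
  + by apply: Hup H _; apply: le_join.
  + have [_ [_ [Hjc _]]] := H1 n; rewrite Hjc.
    by apply: Hup H _; apply: le_join.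
- move=> k x y; apply: feq => t; have [a Ha] := lift k t.
  rewrite (key _ _ _ _ Ha) (key _ _ _ _ Ha) (key _ _ _ _ Ha).
  have [_ [_ [_ ->]]] := H2 k n a; split.
  + move=> H; split; [exact: Fml H|exact: Fmr H].
  + by case=> ? ?; apply: Hmeet.
- move=> k i j; apply: feq => t; have [a Ha] := lift k t.
  rewrite (key _ _ _ _ Ha) H13 -HFs !Ha; done.
- move=> k m a r; apply: feq => t; have [b Hb] := lift m t.
  rewrite (key _ _ _ _ Hb) (key k r (fun i => t (a i)) (fun i => b (a i))) -?H3 //.
Qed.
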